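(* Let $n\ge 1$ be an integer and let $\mathbb{Z}_5^n$ denote the elementary abelian $5$-group of rank $n$. Suppose that $A\subseteq\mathbb{Z}_5^n$ is sum-free. If $|A|>\frac32\cdot5^{n-1}$, then there are a proper subgroup $H<\mathbb{Z}_5^n$ and an element $e\notin H$ such that $A\subseteq(e+H)\cup(-e+H)$.
   Context: A subset $S$ of an abelian group is sum-free if there are no $x,y,z\in S$ (not necessarily distinct) with $x+y=z$; equivalently $S\cap 2S=\emptyset$, where $2S=\{s_1+s_2: s_1,s_2\in S\}$. *)

(* Defs.v *)
From HB Require Import structures.
From mathcomp Require Import all_boot all_order all_algebra.
Set Implicit Arguments. Unset Strict Implicit. Unset Printing Implicit Defensive.
Import GRing.Theory.
Local Open Scope ring_scope.

Definition Z5n (n : nat) := 'rV['Z_5]_n.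

Definition sum_free (V : zmodType) (S : pred V) : Prop :=
  forall x y z, x \in S -> y \in S -> z \in S -> x + y != z.

Definition is_subgroup (V : finZmodType) (H : {set V}) : Prop :=
  [/\ 0 \in H, forall x y, x \in H -> y \in H -> x + y \in H
    & forall x, x \in H -> - x \in H].

Definition coset_add (V : finZmodType) (e : V) (H : {set V}) : {set V} :=
  [set e + h | h in H].

(* Main.v *)
Require Import Defs.
From HB Require Import structures.
From mathcomp Require Import all_boot all_order all_algebra.
From mathcomp Require Import ring lra zify.
Import GRing.Theory Num.Theory.
Local Open Scope ring_scope.
Set Implicit Arguments. Unset Strict Implicit. Unset Printing Implicit Defensive.

(* If for some u the support of (a_i) lies in
   {1,4} or {2,3}, we are done (H = ker u).  Otherwise sum-freeness forces
   2 a_i <= 5^(n-1) for all i, and a polynomial inequality (proved with an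
   explicit sum-of-squares style certificate and lra) bounds a Fourier-type
   quantity per direction from below; double counting over all u gives the
   exact total, which contradicts |A| > 1.5 * 5^(n-1). *)


Lemma Z5_inv (a : 'Z_5) : a != 0 -> exists b, a * b = 1.
Proof.
case: a => [[|[|[|[|[|//]]]]] ?] // _.
- by exists 1; apply: val_inj.
- by exists 3; apply: val_inj.
- by exists 2; apply: val_inj.
- by exists 4; apply: val_inj.
Qed.

Definition dot n (u x : 'rV['Z_5]_n) : 'Z_5 := \sum_(j < n) u 0 j * x 0 j.

Lemma dotDr n (u x y : 'rV['Z_5]_n) : dot u (x + y) = dot u x + dot u y.
Proof. by rewrite /dot -big_split; apply: eq_bigr => j _; rewrite mxE mulrDr. Qed.

Lemma dotNr n (u x : 'rV['Z_5]_n) : dot u (- x) = - dot u x.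
Proof. by rewrite /dot -sumrN; apply: eq_bigr => j _; rewrite mxE mulrN. Qed.

Lemma dotBr n (u x y : 'rV['Z_5]_n) : dot u (x - y) = dot u x - dot u y.
Proof. by rewrite dotDr dotNr. Qed.

Lemma dot0r n (u : 'rV['Z_5]_n) : dot u 0 = 0.
Proof. by rewrite /dot big1 // => j _; rewrite mxE mulr0. Qed.

Lemma dot0l n (x : 'rV['Z_5]_n) : dot 0 x = 0.
Proof. by rewrite /dot big1 // => j _; rewrite mxE mul0r. Qed.

Lemma dotC n (u x : 'rV['Z_5]_n) : dot u x = dot x u.
Proof. by rewrite /dot; apply: eq_bigr => j _; rewrite mulrC. Qed.

Lemma card_rV5 n : #|{: 'rV['Z_5]_n}| = (5 ^ n)%N.
Proof. by rewrite card_mx card_ord mul1n. Qed.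

Lemma fiber_card n (w : 'rV['Z_5]_n) (c : 'Z_5) : w != 0 ->
  #|[set u : 'rV['Z_5]_n | dot w u == c]| = (5 ^ n.-1)%N.
Proof.
move=> w0.
have [j wj] : exists j, w 0 j != 0.
  apply/existsP; apply: contraR w0 => /existsPn h; apply/eqP/rowP => j.
  by rewrite mxE; apply/eqP; move: (h j); rewrite negbK.
pose ej (t : 'Z_5) : 'rV['Z_5]_n := \row_k (if k == j then t else 0).
have dej t : dot w (ej t) = w 0 j * t.
  rewrite /dot (bigD1 j) //= big1 ?addr0; first by rewrite mxE eqxx.
  by move=> k /negbTE kj; rewrite mxE kj mulr0.
have [b hb] := Z5_inv wj.
pose K := [set u : 'rV['Z_5]_n | dot w u == 0].
have fibK d : #|[set u : 'rV['Z_5]_n | dot w u == d]| = #|K|.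
  have -> : [set u : 'rV['Z_5]_n | dot w u == d] = [set u + ej (b * d) | u in K].
    apply/setP => x; rewrite inE; apply/idP/imsetP.
    - move=> /eqP hx; exists (x - ej (b * d)); last by rewrite subrK.
      by rewrite inE dotBr hx dej mulrA hb mul1r subrr.
    - by move=> [y]; rewrite inE => /eqP hy ->; rewrite dotDr hy dej mulrA hb mul1r add0r.
  by rewrite card_imset //; apply: addIr.
have tot : (5 ^ n = 5 * #|K|)%N.
  have -> : (5 ^ n = \sum_(d : 'Z_5) #|[set u : 'rV['Z_5]_n | dot w u == d]|)%N.
    rewrite -card_rV5 -[LHS]sum1_card (partition_big (fun u => dot w u) predT) //=.
    apply: eq_bigr => d _; rewrite -sum1_card; apply: eq_bigl => u; by rewrite inE.
  rewrite (eq_bigr (fun _ => #|K|)); last by move=> d _; rewrite fibK.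
  by rewrite sum_nat_const card_ord.
have n0 : (0 < n)%N := leq_ltn_trans (leq0n j) (ltn_ord j).
have e5 : (5 ^ n = 5 * 5 ^ n.-1)%N by rewrite -expnS prednK.
rewrite fibK; move: tot; rewrite e5 => /eqP.
by rewrite eqn_pmul2l // => /eqP ->.
Qed.


Definition fa n (A : {set 'rV['Z_5]_n}) (u : 'rV['Z_5]_n) (i : 'Z_5) : nat :=
  #|[set x in A | dot u x == i]|.

Lemma disj_card (T : finType) (X Y F : {set T}) :
  X \subset F -> Y \subset F -> (forall x, x \in X -> x \in Y -> False) ->
  (#|X| + #|Y| <= #|F|)%N.
Proof.
move=> XF YF d.
have I0 : X :&: Y = set0.
  by apply/setP => x; rewrite !inE; apply/negP => /andP [hx hy]; exact: d x hx hy.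
rewrite -cardsUI I0 cards0 addn0; apply: subset_leq_card; by rewrite subUset XF YF.
Qed.

Lemma fa_gt0 n (A : {set 'rV['Z_5]_n}) u i :
  (0 < fa A u i)%N -> exists2 x, x \in A & dot u x = i.
Proof.
rewrite /fa card_gt0 => /set0Pn [x]; rewrite inE => /andP [xA /eqP e]; by exists x.
Qed.

Lemma fa_sub n (A : {set 'rV['Z_5]_n}) u i :
  [set x in A | dot u x == i] \subset [set x | dot u x == i].
Proof. by apply/subsetP => x; rewrite !inE => /andP []. Qed.

Lemma PH n (A : {set 'rV['Z_5]_n}) u (i j : 'Z_5) : u != 0 -> sum_free (mem A) ->
  (0 < fa A u (i + j)%R)%N -> (fa A u i + fa A u j <= 5 ^ n.-1)%N.
Proof.
move=> u0 sf /fa_gt0 [z zA dz].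
pose Y := [set z - y | y in [set y in A | dot u y == j]].
have cY : #|Y| = fa A u j.
  by rewrite /Y card_imset //; apply: subrI.
rewrite -cY -(fiber_card i u0); apply: disj_card.
- exact: fa_sub.
- apply/subsetP => x /imsetP [y]; rewrite !inE => /andP [_ /eqP dy] ->.
  by rewrite dotBr dz dy addrK.
- move=> x; rewrite inE => /andP [xA _] /imsetP [y]; rewrite inE => /andP [yA _] exy.
  have := sf x y z xA yA zA; by rewrite exy subrK eqxx.
Qed.

Lemma TR n (A : {set 'rV['Z_5]_n}) u (i j : 'Z_5) : u != 0 -> sum_free (mem A) ->
  (0 < fa A u i)%N -> (fa A u j + fa A u (i + j)%R <= 5 ^ n.-1)%N.
Proof.
move=> u0 sf /fa_gt0 [x0 x0A dx0].
pose Y := [set x0 + y | y in [set y in A | dot u y == j]].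
have cY : #|Y| = fa A u j.
  by rewrite /Y card_imset //; apply: addrI.
rewrite -cY -(fiber_card (i + j) u0); apply: disj_card.
- apply/subsetP => x /imsetP [y]; rewrite !inE => /andP [_ /eqP dy] ->.
  by rewrite dotDr dx0 dy.
- exact: fa_sub.
- move=> x /imsetP [y]; rewrite inE => /andP [yA _] -> ; rewrite inE => /andP [zA _].
  have := sf x0 y (x0 + y) x0A yA zA; by rewrite eqxx.
Qed.

Lemma fiber_sum n (A : {set 'rV['Z_5]_n}) u (F : 'Z_5 -> nat) :
  (\sum_(x in A) F (dot u x) = \sum_(i : 'Z_5) fa A u i * F i)%N.
Proof.
rewrite (partition_big (fun x => dot u x) predT) //=.
apply: eq_bigr => i _.
rewrite (eq_bigr (fun _ => F i)); last by move=> x /andP [_ /eqP ->].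
rewrite sum_nat_const /fa; congr (_ * _)%N; apply: eq_card => x; by rewrite inE.
Qed.

Lemma sum_pick (F : 'Z_5 -> nat) (c : 'Z_5) :
  (\sum_(i : 'Z_5) F i * (c == i) = F c)%N.
Proof.
rewrite (bigD1 c) //= eqxx muln1 big1 ?addn0 // => i /negbTE ic.
by rewrite eq_sym ic muln0.
Qed.


Lemma key_ineq (R : realFieldType) (a0 a1 a2 a3 a4 m : R) :
  0 <= a0 -> 0 <= a1 -> 0 <= a2 -> 0 <= a3 -> 0 <= a4 ->
  2 * a0 <= m -> 2 * a1 <= m -> 2 * a2 <= m -> 2 * a3 <= m -> 2 * a4 <= m ->
  3 * m <= 2 * (a0 + a1 + a2 + a3 + a4) ->
  11 * m * (a0 + a1 + a2 + a3 + a4) ^+ 2 + 14 * (a0 + a1 + a2 + a3 + a4) ^+ 3 <=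
  m * (48 * (a0 * a0 + a1 * a1 + a2 * a2 + a3 * a3 + a4 * a4) + 7 * (a0 * a0 + a1 * a2 + a2 * a4 + a3 * a1 + a4 * a3)) + 70 * (a0 * (a0 * a0 + a1 * a1 + a2 * a2 + a3 * a3 + a4 * a4) + a1 * (a0 * a1 + a1 * a2 + a2 * a3 + a3 * a4 + a4 * a0) + a2 * (a0 * a2 + a1 * a3 + a2 * a4 + a3 * a0 + a4 * a1) + a3 * (a0 * a3 + a1 * a4 + a2 * a0 + a3 * a1 + a4 * a2) + a4 * (a0 * a4 + a1 * a0 + a2 * a1 + a3 * a2 + a4 * a3)).
Proof.
move=> p0 p1 p2 p3 p4 q0 q1 q2 q3 q4 hs.
have hm : 0 <= m by lra.
have r0 : 0 <= m - 2 * a0 by lra.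
have r1 : 0 <= m - 2 * a1 by lra.
have r2 : 0 <= m - 2 * a2 by lra.
have r3 : 0 <= m - 2 * a3 by lra.
have r4 : 0 <= m - 2 * a4 by lra.
have rs : 0 <= 2 * (a0 + a1 + a2 + a3 + a4) - 3 * m by lra.
  have h0 : 0 <= m * (a2 - a3) ^+ 2 by apply: mulr_ge0 => //; rewrite sqr_ge0.
  have h1 : 0 <= m * (a1 - a2 + a3 - a4) ^+ 2 by apply: mulr_ge0 => //; rewrite sqr_ge0.
  have h2 : 0 <= m * (a1 + a2 - a3 - a4) ^+ 2 by apply: mulr_ge0 => //; rewrite sqr_ge0.
  have h3 : 0 <= m * (a0 - a1 - a3 + a4) ^+ 2 by apply: mulr_ge0 => //; rewrite sqr_ge0.
  have h4 : 0 <= a0 * (a0 - a1 - a3 + a4) ^+ 2 by apply: mulr_ge0 => //; rewrite sqr_ge0.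
  have h5 : 0 <= a0 * (a0 - a1 + a2 - a3) ^+ 2 by apply: mulr_ge0 => //; rewrite sqr_ge0.
  have h6 : 0 <= a0 * (a0 - a4) ^+ 2 by apply: mulr_ge0 => //; rewrite sqr_ge0.
  have h7 : 0 <= a0 * (a0 + a1 - a3 - a4) ^+ 2 by apply: mulr_ge0 => //; rewrite sqr_ge0.
  have h8 : 0 <= a1 * (a1 + a2 - a3 - a4) ^+ 2 by apply: mulr_ge0 => //; rewrite sqr_ge0.
  have h9 : 0 <= a2 * (a0 - a1 - a2 + a3) ^+ 2 by apply: mulr_ge0 => //; rewrite sqr_ge0.
  have h10 : 0 <= (m - 2 * a1) * (a1 - a2 + a3 - a4) ^+ 2 by apply: mulr_ge0 => //; rewrite sqr_ge0.
  have h11 : 0 <= (m - 2 * a1) * (a0 - a1) ^+ 2 by apply: mulr_ge0 => //; rewrite sqr_ge0.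
  have h12 : 0 <= (m - 2 * a1) * (a0 - a1 + a3 - a4) ^+ 2 by apply: mulr_ge0 => //; rewrite sqr_ge0.
  have h13 : 0 <= (m - 2 * a1) * (a0 - a1 + a2 - a4) ^+ 2 by apply: mulr_ge0 => //; rewrite sqr_ge0.
  have h14 : 0 <= (m - 2 * a1) * (a0 - a2 + a3 - a4) ^+ 2 by apply: mulr_ge0 => //; rewrite sqr_ge0.
  have h15 : 0 <= (m - 2 * a2) * (a1 - a2 + a3 - a4) ^+ 2 by apply: mulr_ge0 => //; rewrite sqr_ge0.
  have h16 : 0 <= (m - 2 * a2) * (a0 - a1 - a2 + a4) ^+ 2 by apply: mulr_ge0 => //; rewrite sqr_ge0.
  have h17 : 0 <= (m - 2 * a2) * (a0 - a1 - a3 + a4) ^+ 2 by apply: mulr_ge0 => //; rewrite sqr_ge0.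
  have h18 : 0 <= (m - 2 * a2) * (a0 + a1 - a2 - a3) ^+ 2 by apply: mulr_ge0 => //; rewrite sqr_ge0.
  have h19 : 0 <= (m - 2 * a2) * (a0 + a1 - a3 - a4) ^+ 2 by apply: mulr_ge0 => //; rewrite sqr_ge0.
  have h20 : 0 <= (m - 2 * a3) * (a1 + a2 - a3 - a4) ^+ 2 by apply: mulr_ge0 => //; rewrite sqr_ge0.
  have h21 : 0 <= (m - 2 * a3) * (a0 - a2 - a3 + a4) ^+ 2 by apply: mulr_ge0 => //; rewrite sqr_ge0.
  have h22 : 0 <= (m - 2 * a3) * (a0 - a3) ^+ 2 by apply: mulr_ge0 => //; rewrite sqr_ge0.
  have h23 : 0 <= (m - 2 * a3) * (a0 + a1 - a2 - a3) ^+ 2 by apply: mulr_ge0 => //; rewrite sqr_ge0.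
  have h24 : 0 <= (m - 2 * a3) * (a0 + a1 - a2 - a4) ^+ 2 by apply: mulr_ge0 => //; rewrite sqr_ge0.
  have h25 : 0 <= (m - 2 * a4) * (a0 - a1 - a2 + a3) ^+ 2 by apply: mulr_ge0 => //; rewrite sqr_ge0.
  have h26 : 0 <= (m - 2 * a4) * (a0 - a1 + a3 - a4) ^+ 2 by apply: mulr_ge0 => //; rewrite sqr_ge0.
  have h27 : 0 <= (m - 2 * a4) * (a0 - a1 + a2 - a3) ^+ 2 by apply: mulr_ge0 => //; rewrite sqr_ge0.
  have h28 : 0 <= (m - 2 * a4) * (a0 - a2 + a3 - a4) ^+ 2 by apply: mulr_ge0 => //; rewrite sqr_ge0.
  have h29 : 0 <= (m - 2 * a4) * (a0 + a2 - a3 - a4) ^+ 2 by apply: mulr_ge0 => //; rewrite sqr_ge0.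
  have h30 : 0 <= (2 * (a0 + a1 + a2 + a3 + a4) - 3 * m) * (a3 - a4) ^+ 2 by apply: mulr_ge0 => //; rewrite sqr_ge0.
  have h31 : 0 <= (2 * (a0 + a1 + a2 + a3 + a4) - 3 * m) * (a2 - a4) ^+ 2 by apply: mulr_ge0 => //; rewrite sqr_ge0.
  have h32 : 0 <= (2 * (a0 + a1 + a2 + a3 + a4) - 3 * m) * (a1 - a2 + a3 - a4) ^+ 2 by apply: mulr_ge0 => //; rewrite sqr_ge0.
  have h33 : 0 <= (2 * (a0 + a1 + a2 + a3 + a4) - 3 * m) * (a1 - a4) ^+ 2 by apply: mulr_ge0 => //; rewrite sqr_ge0.
  have h34 : 0 <= (2 * (a0 + a1 + a2 + a3 + a4) - 3 * m) * (a0 - a1 - a2 + a3) ^+ 2 by apply: mulr_ge0 => //; rewrite sqr_ge0.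
  have h35 : 0 <= (2 * (a0 + a1 + a2 + a3 + a4) - 3 * m) * (a0 - a1 - a3 + a4) ^+ 2 by apply: mulr_ge0 => //; rewrite sqr_ge0.
  have h36 : 0 <= (2 * (a0 + a1 + a2 + a3 + a4) - 3 * m) * (a0 - a1 + a2 - a4) ^+ 2 by apply: mulr_ge0 => //; rewrite sqr_ge0.
  have h37 : 0 <= (2 * (a0 + a1 + a2 + a3 + a4) - 3 * m) * (a0 - a4) ^+ 2 by apply: mulr_ge0 => //; rewrite sqr_ge0.
  have h38 : 0 <= (2 * (a0 + a1 + a2 + a3 + a4) - 3 * m) * (a0 + a2 - a3 - a4) ^+ 2 by apply: mulr_ge0 => //; rewrite sqr_ge0.
  have h39 : 0 <= (2 * (a0 + a1 + a2 + a3 + a4) - 3 * m) * (a0 + a1 - a2 - a3) ^+ 2 by apply: mulr_ge0 => //; rewrite sqr_ge0.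

lra.
Qed.

Lemma key_nat (a0 a1 a2 a3 a4 m : nat) :
  (2 * a0 <= m)%N -> (2 * a1 <= m)%N -> (2 * a2 <= m)%N -> (2 * a3 <= m)%N -> (2 * a4 <= m)%N ->
  (3 * m <= 2 * (a0 + a1 + a2 + a3 + a4))%N ->
  (11 * m * (a0 + a1 + a2 + a3 + a4) ^ 2 + 14 * (a0 + a1 + a2 + a3 + a4) ^ 3 <=
  m * (48 * (a0 * a0 + a1 * a1 + a2 * a2 + a3 * a3 + a4 * a4) + 7 * (a0 * a0 + a1 * a2 + a2 * a4 + a3 * a1 + a4 * a3)) + 70 * (a0 * (a0 * a0 + a1 * a1 + a2 * a2 + a3 * a3 + a4 * a4) + a1 * (a0 * a1 + a1 * a2 + a2 * a3 + a3 * a4 + a4 * a0) + a2 * (a0 * a2 + a1 * a3 + a2 * a4 + a3 * a0 + a4 * a1) + a3 * (a0 * a3 + a1 * a4 + a2 * a0 + a3 * a1 + a4 * a2) + a4 * (a0 * a4 + a1 * a0 + a2 * a1 + a3 * a2 + a4 * a3)))%N.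
Proof.
move=> q0 q1 q2 q3 q4 hs.
have c : forall x y : nat, (x <= y)%N -> (x%:R <= y%:R :> rat) by move=> x y; rewrite ler_nat.
move/c: q0; move/c: q1; move/c: q2; move/c: q3; move/c: q4; move/c: hs.
rewrite -(ler_nat rat).
move=> hs q4 q3 q2 q1 q0.
have hs' : 3 * m%:R <= 2 * (a0%:R + a1%:R + a2%:R + a3%:R + a4%:R :> rat) by lra.
have q0' : 2 * a0%:R <= m%:R :> rat by lra.
have q1' : 2 * a1%:R <= m%:R :> rat by lra.
have q2' : 2 * a2%:R <= m%:R :> rat by lra.
have q3' : 2 * a3%:R <= m%:R :> rat by lra.
have q4' : 2 * a4%:R <= m%:R :> rat by lra.
have H := @key_ineq rat a0%:R a1%:R a2%:R a3%:R a4%:R m%:R (ler0n _ _) (ler0n _ _) (ler0n _ _) (ler0n _ _) (ler0n _ _) q0' q1' q2' q3' q4' hs'.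
lra.
Qed.


Lemma cube (a0 a1 a2 a3 a4 m : nat) :
  ((0 < a0)%N -> (a0 + a0 <= m)%N) ->
  ((0 < a2)%N -> (a1 + a1 <= m)%N) -> ((0 < a4)%N -> (a2 + a2 <= m)%N) ->
  ((0 < a1)%N -> (a3 + a3 <= m)%N) -> ((0 < a3)%N -> (a4 + a4 <= m)%N) ->
  ((0 < a0)%N -> (a1 + a1 <= m)%N) -> ((0 < a0)%N -> (a2 + a2 <= m)%N) ->
  ((0 < a0)%N -> (a3 + a3 <= m)%N) -> ((0 < a0)%N -> (a4 + a4 <= m)%N) ->
  ((0 < a1)%N -> (a1 + a2 <= m)%N) -> ((0 < a2)%N -> (a2 + a4 <= m)%N) ->
  ((0 < a3)%N -> (a3 + a1 <= m)%N) -> ((0 < a4)%N -> (a4 + a3 <= m)%N) ->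
  [\/ (0 < a0)%N, (0 < a2)%N | (0 < a3)%N] ->
  [\/ (0 < a0)%N, (0 < a1)%N | (0 < a4)%N] ->
  (3 * m < 2 * (a0 + a1 + a2 + a3 + a4))%N ->
  [/\ (2 * a0 <= m)%N, (2 * a1 <= m)%N, (2 * a2 <= m)%N, (2 * a3 <= m)%N & (2 * a4 <= m)%N].
Proof.
move=> h1 h2 h3 h4 h5 h6 h7 h8 h9 h10 h11 h12 h13 [u|u|u] [v|v|v] hs; split; lia.
Qed.


Lemma sumZ5n (F : 'Z_5 -> nat) :
  (\sum_(i : 'Z_5) F i = F 0%R + F 1%R + F 2%R + F 3%R + F 4%R)%N.
Proof.
rewrite /= !big_ord_recl big_ord0 addn0 !addnA.
do 4? congr (_ + _)%N; congr F; exact: val_inj.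
Qed.

Lemma Z5_cases (i : 'Z_5) : i = 0 \/ i = 1 \/ i = 2 \/ i = 3 \/ i = 4.
Proof.
case: i => [[|[|[|[|[|//]]]]] ?].
- by left; apply: val_inj.
- by right; left; apply: val_inj.
- by right; right; left; apply: val_inj.
- by right; right; right; left; apply: val_inj.
- by right; right; right; right; apply: val_inj.
Qed.

Lemma z00 : (0 + 0 : 'Z_5) = 0. Proof. exact: val_inj. Qed.
Lemma z01 : (0 + 1 : 'Z_5) = 1. Proof. exact: val_inj. Qed.
Lemma z02 : (0 + 2 : 'Z_5) = 2. Proof. exact: val_inj. Qed.
Lemma z03 : (0 + 3 : 'Z_5) = 3. Proof. exact: val_inj. Qed.
Lemma z04 : (0 + 4 : 'Z_5) = 4. Proof. exact: val_inj. Qed.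
Lemma z10 : (1 + 0 : 'Z_5) = 1. Proof. exact: val_inj. Qed.
Lemma z11 : (1 + 1 : 'Z_5) = 2. Proof. exact: val_inj. Qed.
Lemma z12 : (1 + 2 : 'Z_5) = 3. Proof. exact: val_inj. Qed.
Lemma z13 : (1 + 3 : 'Z_5) = 4. Proof. exact: val_inj. Qed.
Lemma z14 : (1 + 4 : 'Z_5) = 0. Proof. exact: val_inj. Qed.
Lemma z20 : (2 + 0 : 'Z_5) = 2. Proof. exact: val_inj. Qed.
Lemma z21 : (2 + 1 : 'Z_5) = 3. Proof. exact: val_inj. Qed.
Lemma z22 : (2 + 2 : 'Z_5) = 4. Proof. exact: val_inj. Qed.
Lemma z23 : (2 + 3 : 'Z_5) = 0. Proof. exact: val_inj. Qed.
Lemma z24 : (2 + 4 : 'Z_5) = 1. Proof. exact: val_inj. Qed.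
Lemma z30 : (3 + 0 : 'Z_5) = 3. Proof. exact: val_inj. Qed.
Lemma z31 : (3 + 1 : 'Z_5) = 4. Proof. exact: val_inj. Qed.
Lemma z32 : (3 + 2 : 'Z_5) = 0. Proof. exact: val_inj. Qed.
Lemma z33 : (3 + 3 : 'Z_5) = 1. Proof. exact: val_inj. Qed.
Lemma z34 : (3 + 4 : 'Z_5) = 2. Proof. exact: val_inj. Qed.
Lemma z40 : (4 + 0 : 'Z_5) = 4. Proof. exact: val_inj. Qed.
Lemma z41 : (4 + 1 : 'Z_5) = 0. Proof. exact: val_inj. Qed.
Lemma z42 : (4 + 2 : 'Z_5) = 1. Proof. exact: val_inj. Qed.
Lemma z43 : (4 + 3 : 'Z_5) = 2. Proof. exact: val_inj. Qed.
Lemma z44 : (4 + 4 : 'Z_5) = 3. Proof. exact: val_inj. Qed.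
Definition z5E := (z00, z01, z02, z03, z04, z10, z11, z12, z13, z14, z20, z21, z22, z23, z24,
  z30, z31, z32, z33, z34, z40, z41, z42, z43, z44).

Lemma Zm1 : (-1 : 'Z_5) = 4. Proof. exact: val_inj. Qed.
Lemma Zm2 : (-2 : 'Z_5) = 3. Proof. exact: val_inj. Qed.


Definition S2 n (A : {set 'rV['Z_5]_n}) u : nat :=
  \sum_(x in A) \sum_(y in A) (dot u x == dot u y : nat).
Definition D2 n (A : {set 'rV['Z_5]_n}) u : nat :=
  \sum_(x in A) \sum_(y in A) (dot u y == (dot u x + dot u x)%R : nat).
Definition S3 n (A : {set 'rV['Z_5]_n}) u : nat :=
  \sum_(x in A) \sum_(y in A) \sum_(z in A) ((dot u x + dot u y)%R == dot u z : nat).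

Lemma sum_pick' (F : 'Z_5 -> nat) (c : 'Z_5) :
  (\sum_(i : 'Z_5) F i * (i == c) = F c)%N.
Proof.
rewrite (bigD1 c) //= eqxx muln1 big1 ?addn0 // => i /negbTE ic.
by rewrite ic muln0.
Qed.

Lemma S2E n (A : {set 'rV['Z_5]_n}) u :
  S2 A u = (\sum_(i : 'Z_5) fa A u i * fa A u i)%N.
Proof.
rewrite /S2 (eq_bigr (fun x => fa A u (dot u x))) ?fiber_sum // => x _.
by rewrite (fiber_sum A u (fun c => (dot u x == c : nat))) sum_pick.
Qed.

Lemma D2E n (A : {set 'rV['Z_5]_n}) u :
  D2 A u = (\sum_(i : 'Z_5) fa A u i * fa A u (i + i)%R)%N.
Proof.
rewrite /D2 (eq_bigr (fun x => fa A u (dot u x + dot u x))).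
  by rewrite (fiber_sum A u (fun c => fa A u (c + c))).
move=> x _.
by rewrite (fiber_sum A u (fun c => (c == dot u x + dot u x : nat))) sum_pick'.
Qed.

Lemma S3E n (A : {set 'rV['Z_5]_n}) u :
  S3 A u = (\sum_(i : 'Z_5) fa A u i * (\sum_(j : 'Z_5) fa A u j * fa A u (i + j)%R))%N.
Proof.
rewrite /S3 (eq_bigr (fun x => \sum_(j : 'Z_5) fa A u j * fa A u (dot u x + j)%R)%N).
  by rewrite (fiber_sum A u (fun c => \sum_(j : 'Z_5) fa A u j * fa A u (c + j)%R)%N).
move=> x _.
rewrite (eq_bigr (fun y => fa A u (dot u x + dot u y))).
  by rewrite (fiber_sum A u (fun c => fa A u (dot u x + c))).
move=> y _.
by rewrite (fiber_sum A u (fun c => (dot u x + dot u y == c : nat))) sum_pick.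
Qed.

Lemma cardAE n (A : {set 'rV['Z_5]_n}) u : #|A| = (\sum_(i : 'Z_5) fa A u i)%N.
Proof.
rewrite -sum1_card (fiber_sum A u (fun _ => 1%N)).
by apply: eq_bigr => i _; rewrite muln1.
Qed.


Definition sdir n (A : {set 'rV['Z_5]_n}) u :=
  [forall x in A, (dot u x == 1) || (dot u x == -1)] ||
  [forall x in A, (dot u x == 2) || (dot u x == -2)].

Lemma fa_pos n (A : {set 'rV['Z_5]_n}) u x : x \in A -> (0 < fa A u (dot u x))%N.
Proof. by move=> xA; apply/card_gt0P; exists x; rewrite inE xA eqxx. Qed.

Lemma dir_ineq n (A : {set 'rV['Z_5]_n}) u : u != 0 -> sum_free (mem A) ->
  ~~ sdir A u -> (3 * 5 ^ n.-1 < 2 * #|A|)%N ->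
  (11 * 5 ^ n.-1 * #|A| ^ 2 + 14 * #|A| ^ 3 <=
   5 ^ n.-1 * (48 * S2 A u + 7 * D2 A u) + 70 * S3 A u)%N.
Proof.
move=> u0 sf nsd hs.
have U : [\/ (0 < fa A u 0%R)%N, (0 < fa A u 2%R)%N | (0 < fa A u 3%R)%N] /\
         [\/ (0 < fa A u 0%R)%N, (0 < fa A u 1%R)%N | (0 < fa A u 4%R)%N].
  move: nsd; rewrite negb_or => /andP [/forall_inPn [x xA hx] /forall_inPn [y yA hy]].
  have px := fa_pos u xA; have py := fa_pos u yA.
  split.
  - move: hx px; rewrite Zm1; case: (Z5_cases (dot u x)) => [->|[->|[->|[->|->]]]] hx h;
      first [by constructor 1 | by constructor 2 | by constructor 3 |
             by rewrite eqxx orbT in hx | by rewrite eqxx in hx].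
  - move: hy py; rewrite Zm2; case: (Z5_cases (dot u y)) => [->|[->|[->|[->|->]]]] hy h;
      first [by constructor 1 | by constructor 2 | by constructor 3 |
             by rewrite eqxx orbT in hy | by rewrite eqxx in hy].
case: U => U1 U2.
have P00 := @PH n A u 0 0 u0 sf; have P11 := @PH n A u 1 1 u0 sf; have P22 := @PH n A u 2 2 u0 sf.
have P33 := @PH n A u 3 3 u0 sf; have P44 := @PH n A u 4 4 u0 sf.
have T01 := @TR n A u 0 1 u0 sf; have T02 := @TR n A u 0 2 u0 sf.
have T03 := @TR n A u 0 3 u0 sf; have T04 := @TR n A u 0 4 u0 sf.
have T11 := @TR n A u 1 1 u0 sf; have T22 := @TR n A u 2 2 u0 sf.
have T33 := @TR n A u 3 3 u0 sf; have T44 := @TR n A u 4 4 u0 sf.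
move: P00 P11 P22 P33 P44 T01 T02 T03 T04 T11 T22 T33 T44; rewrite !z5E.
rewrite S2E D2E S3E (cardAE A u) !sumZ5n !z5E.
move: hs; rewrite (cardAE A u) !sumZ5n.
set a0 := fa A u 0; set a1 := fa A u 1; set a2 := fa A u 2.
set a3 := fa A u 3; set a4 := fa A u 4; set m := (5 ^ n.-1)%N.
move=> hs P00 P11 P22 P33 P44 T01 T02 T03 T04 T11 T22 T33 T44.
have [q0 q1 q2 q3 q4] := cube P00 P11 P22 P33 P44 T01 T02 T03 T04 T11 T22 T33 T44 U1 U2 hs.
apply: key_nat q0 q1 q2 q3 q4 _; exact: ltnW.
Qed.


Lemma cnt n (w : 'rV['Z_5]_n) :
  (\sum_(u : 'rV['Z_5]_n) (dot u w == 0%R : nat) = if w == 0%R then 5 ^ n else 5 ^ n.-1)%N.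
Proof.
rewrite (eq_bigr (fun u => if dot w u == 0 then 1%N else 0%N)); last by move=> u _; rewrite dotC.
rewrite -big_mkcond /=.
case: eqP => [->|/eqP w0].
  rewrite (eq_bigl predT) ?sum1_card ?card_rV5 // => u; by rewrite dot0l eqxx.
rewrite sum1_card -(fiber_card 0 w0); apply: eq_card => u; by rewrite inE.
Qed.

Lemma sum_ind n (A : {set 'rV['Z_5]_n}) x : x \in A ->
  (\sum_(y in A) (x == y : nat) = 1)%N.
Proof.
move=> xA; rewrite (bigD1 x) //= eqxx big1 // => y /andP [_ /negbTE].
by rewrite eq_sym => ->.
Qed.

Lemma sumS2 n (A : {set 'rV['Z_5]_n}) : (0 < n)%N ->
  (\sum_(u : 'rV['Z_5]_n) S2 A u = #|A| * (#|A| * 5 ^ n.-1 + 4 * 5 ^ n.-1))%N.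
Proof.
move=> n0.
have e5 : (5 ^ n = 5 ^ n.-1 + 4 * 5 ^ n.-1)%N.
  by rewrite -{1}(prednK n0) expnS; lia.
rewrite /S2 exchange_big /= -sum_nat_const; apply: eq_bigr => x xA.
rewrite exchange_big /=.
rewrite (eq_bigr (fun y => 5 ^ n.-1 + 4 * 5 ^ n.-1 * (x == y))%N).
  by rewrite big_split /= sum_nat_const -big_distrr /= sum_ind // muln1.
move=> y yA.
rewrite (eq_bigr (fun u => (dot u (x - y) == 0 : nat))); last first.
  by move=> u _; rewrite dotBr subr_eq0.
rewrite cnt subr_eq0; case: (eqVneq x y) => [_|ne] /=; first by rewrite muln1.
by rewrite muln0 addn0.
Qed.

Lemma sumD2 n (A : {set 'rV['Z_5]_n}) : sum_free (mem A) ->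
  (\sum_(u : 'rV['Z_5]_n) D2 A u = #|A| * (#|A| * 5 ^ n.-1))%N.
Proof.
move=> sf.
rewrite /D2 exchange_big /= -sum_nat_const; apply: eq_bigr => x xA.
rewrite exchange_big /= -sum_nat_const; apply: eq_bigr => y yA.
rewrite (eq_bigr (fun u => (dot u (y - (x + x)) == 0 : nat))); last first.
  by move=> u _; rewrite dotBr dotDr subr_eq0.
rewrite cnt subr_eq0; case: eqP => // e.
by have := sf x x y xA xA yA; rewrite e eqxx.
Qed.

Lemma sumS3 n (A : {set 'rV['Z_5]_n}) : sum_free (mem A) ->
  (\sum_(u : 'rV['Z_5]_n) S3 A u = #|A| * (#|A| * (#|A| * 5 ^ n.-1)))%N.
Proof.
move=> sf.
rewrite /S3 exchange_big /= -sum_nat_const; apply: eq_bigr => x xA.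
rewrite exchange_big /= -sum_nat_const; apply: eq_bigr => y yA.
rewrite exchange_big /= -sum_nat_const; apply: eq_bigr => z zA.
rewrite (eq_bigr (fun u => (dot u (x + y - z) == 0 : nat))); last first.
  by move=> u _; rewrite dotBr dotDr subr_eq0.
rewrite cnt subr_eq0; case: eqP => // e.
by have := sf x y z xA yA zA; rewrite e eqxx.
Qed.

Lemma R0E n (A : {set 'rV['Z_5]_n}) :
  [/\ S2 A 0 = (#|A| * #|A|)%N, D2 A 0 = (#|A| * #|A|)%N &
      S3 A 0 = (#|A| * (#|A| * #|A|))%N].
Proof.
split.
- rewrite /S2 -sum_nat_const; apply: eq_bigr => x _.
  by rewrite -sum1_card; apply: eq_bigr => y _; rewrite !dot0l eqxx.
- rewrite /D2 -sum_nat_const; apply: eq_bigr => x _.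
  by rewrite -sum1_card; apply: eq_bigr => y _; rewrite !dot0l addr0 eqxx.
- rewrite /S3 -sum_nat_const; apply: eq_bigr => x _.
  rewrite -sum_nat_const; apply: eq_bigr => y _.
  by rewrite -sum1_card; apply: eq_bigr => z _; rewrite !dot0l addr0 eqxx.
Qed.

Lemma exists_dir n (A : {set 'rV['Z_5]_n}) : (1 <= n)%N -> sum_free (mem A) ->
  (3 * 5 ^ n.-1 < 2 * #|A|)%N -> exists2 u, u != 0 & sdir A u.
Proof.
move=> n1 sf hs.
case: (boolP [exists u, (u != 0) && sdir A u]) => [/existsP [u /andP [u0 su]]|/existsPn hno].
  by exists u.
exfalso.
pose R u := (5 ^ n.-1 * (48 * S2 A u + 7 * D2 A u) + 70 * S3 A u)%N.
pose L := (11 * 5 ^ n.-1 * #|A| ^ 2 + 14 * #|A| ^ 3)%N.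
have hle : forall u, u != 0 -> (L <= R u)%N.
  move=> u u0; apply: dir_ineq => //; move: (hno u); by rewrite u0.
have sumR : (\sum_u R u = 5 ^ n.-1 * (48 * (#|A| * (#|A| * 5 ^ n.-1 + 4 * 5 ^ n.-1))
                 + 7 * (#|A| * (#|A| * 5 ^ n.-1))) + 70 * (#|A| * (#|A| * (#|A| * 5 ^ n.-1))))%N.
  rewrite /R big_split /= -big_distrr /= big_split /= -!big_distrr /=.
  by rewrite sumS2 // sumD2 // sumS3.
have [e20 e20' e30] := R0E A.
have R0 : R 0 = (5 ^ n.-1 * (48 * (#|A| * #|A|) + 7 * (#|A| * #|A|)) + 70 * (#|A| * (#|A| * #|A|)))%N.
  by rewrite /R e20 e20' e30.
have key : (5 ^ n * L + R 0%R <= L + \sum_u R u)%N.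
  have sL : (\sum_(u : 'rV['Z_5]_n) L = L + \sum_(u : 'rV['Z_5]_n | u != 0%R) L)%N by rewrite (bigD1 0).
  have sR : (\sum_(u : 'rV['Z_5]_n) R u = R 0%R + \sum_(u : 'rV['Z_5]_n | u != 0%R) R u)%N by rewrite (bigD1 0).
  have sLc : (\sum_(u : 'rV['Z_5]_n) L = 5 ^ n * L)%N.
    rewrite (eq_bigr (fun _ => L * 1)%N); last by move=> *; rewrite muln1.
    rewrite -big_distrr /= mulnC -card_rV5; congr (_ * _)%N.
    first [ by rewrite sum1_card | by rewrite -sum1_card | by rewrite cardE -sum1_size ].
  have h : (\sum_(u : 'rV['Z_5]_n | u != 0%R) L <= \sum_(u : 'rV['Z_5]_n | u != 0%R) R u)%N by apply: leq_sum => u; exact: hle.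
  rewrite -sLc sR; lia.
move: key; rewrite sumR R0 /L.
have e5 : (5 ^ n = 5 * 5 ^ n.-1)%N by rewrite -expnS prednK.
rewrite e5; move: hs; set m := (5 ^ n.-1)%N; set s := #|A|.
move=> hs key.
have m1 : (1 <= m)%N by rewrite expn_gt0.
nia.
Qed.


Lemma build n (A : {set Z5n n}) (u : 'rV['Z_5]_n) (c : 'Z_5) : u != 0 -> c != 0 ->
  (forall x, x \in A -> (dot u x == c) || (dot u x == - c)) ->
  exists H : {set Z5n n},
    [/\ is_subgroup H, H != [set: Z5n n] &
        exists e : Z5n n, e \notin H /\
          A \subset coset_add e H :|: coset_add (- e) H].
Proof.
move=> u0 c0 hA.
have [e de] : exists e : 'rV['Z_5]_n, dot u e = c.
  have : (0 < #|[set v : 'rV['Z_5]_n | dot u v == c]|)%N by rewrite fiber_card // expn_gt0.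
  by case/card_gt0P => e; rewrite inE => /eqP; exists e.
exists [set h : Z5n n | dot u h == 0]; split.
- split.
  + by rewrite inE dot0r.
  + by move=> x y; rewrite !inE dotDr => /eqP -> /eqP ->; rewrite addr0.
  + by move=> x; rewrite !inE dotNr => /eqP ->; rewrite oppr0.
- apply/negP => /eqP HT.
  have : e \in [set: Z5n n] by rewrite inE.
  by rewrite -HT inE de (negbTE c0).
- exists e; split; first by rewrite inE de.
  apply/subsetP => x xA; rewrite inE.
  case/orP: (hA x xA) => /eqP dx.
  + apply/orP; left; apply/imsetP; exists (x - e); first by rewrite inE dotBr dx de subrr.
    by rewrite addrC subrK.
  + apply/orP; right; apply/imsetP; exists (x + e); first by rewrite inE dotDr dx de addNr.
    by rewrite addrC addrK.
Qed.

Unset Implicit Arguments.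

Theorem theorem3 (n : nat) (A : {set Z5n n}) :
  (1 <= n)%N ->
  sum_free (mem A) ->
  (3 * 5 ^ n.-1 < 2 * #|A|)%N ->
  exists H : {set Z5n n},
    [/\ is_subgroup H, H != [set: Z5n n] &
        exists e : Z5n n, e \notin H /\
          A \subset coset_add e H :|: coset_add (- e) H].
Proof.
move=> n1 sf hs.
have [u u0 su] := exists_dir n1 sf hs.
case/orP: su => [/forall_inP h | /forall_inP h].
- apply: (build (c := 1)) u0 _ _; first exact: oner_neq0.
  by move=> x /h.
- apply: (build (c := 2)) u0 _ _; first by [].
  by move=> x /h.
Qed.
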